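(* Let $R$ be a ring and $n$ a positive integer such that every proper ideal of $R$ is a weakly $n$-absorbing ideal of $R$. Then: (1) $\dim(R)=0$; (2) $R$ has at most $n+1$ prime ideals that are pairwise comaximal; in particular, $R$ has at most $n+1$ maximal ideals.
   Context: All rings are commutative with $1\neq0$. A proper ideal $I$ of $R$ is weakly $n$-absorbing if whenever $0\neq a_1\cdots a_{n+1}\in I$ with $a_1,\dots,a_{n+1}\in R$, there are $n$ of the $a_i$'s whose product is in $I$. $\dim(R)$ is the Krull dimension. *)

(* Defs.v *)
From mathcomp Require Import all_boot all_order all_algebra.
Set Implicit Arguments. Unset Strict Implicit. Unset Printing Implicit Defensive.
Import GRing.Theory.
Local Open Scope ring_scope.

Section Ideals.
Variable R : comNzRingType.

Definition wn_is_ideal (I : R -> Prop) : Prop :=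
  [/\ I 0, (forall x y, I x -> I y -> I (x + y)),
      (forall x, I x -> I (- x)) & (forall r x, I x -> I (r * x))].

Definition wn_proper_ideal (I : R -> Prop) : Prop := wn_is_ideal I /\ ~ I 1.

Definition subset_ideal (I J : R -> Prop) : Prop := forall x, I x -> J x.

Definition wn_prime_ideal (P : R -> Prop) : Prop :=
  wn_proper_ideal P /\ (forall a b, P (a * b) -> P a \/ P b).

Definition wn_maximal_ideal (M : R -> Prop) : Prop :=
  wn_proper_ideal M /\
  (forall J, wn_is_ideal J -> subset_ideal M J -> subset_ideal J M \/ J 1).

Definition comaximal (I J : R -> Prop) : Prop :=
  exists x y, I x /\ J y /\ x + y = 1.

Definition weakly_n_absorbing (n : nat) (I : R -> Prop) : Prop :=
  wn_proper_ideal I /\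
  forall a : 'I_n.+1 -> R,
    \prod_(i < n.+1) a i != 0 -> I (\prod_(i < n.+1) a i) ->
    exists j : 'I_n.+1, I (\prod_(i < n.+1 | i != j) a i).

(* Krull dimension 0: there is a prime ideal (a chain of length 0) and
   there is no chain P0 < P1 of prime ideals (no chain of length 1). *)
Definition krull_dim_zero : Prop :=
  (exists P, wn_prime_ideal P) /\
  (forall P Q, wn_prime_ideal P -> wn_prime_ideal Q ->
     subset_ideal P Q -> subset_ideal Q P).
End Ideals.

(* Main.v *)
Require Import Defs.
From mathcomp Require Import all_boot all_order all_algebra.
From Stdlib Require Import Classical ClassicalEpsilon FunctionalExtensionality PropExtensionality.
Set Implicit Arguments. Unset Strict Implicit. Unset Printing Implicit Defensive.
Import GRing.Theory.
Local Open Scope ring_scope.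

Lemma id_mulr (R : comNzRingType) (I : R -> Prop) r x :
  wn_is_ideal I -> I x -> I (r * x).
Proof. by case=> _ _ _ h; apply: h. Qed.

Lemma id_mull (R : comNzRingType) (I : R -> Prop) r x :
  wn_is_ideal I -> I x -> I (x * r).
Proof. by move=> hI hx; rewrite mulrC; apply: id_mulr. Qed.

Lemma id_add (R : comNzRingType) (I : R -> Prop) x y :
  wn_is_ideal I -> I x -> I y -> I (x + y).
Proof. by case=> _ h _ _; apply: h. Qed.

Lemma id_sub (R : comNzRingType) (I : R -> Prop) x y :
  wn_is_ideal I -> I x -> I y -> I (x - y).
Proof. by move=> hI hx hy; apply: id_add => //; case: hI => _ _ h _; apply: h. Qed.

Lemma id_0 (R : comNzRingType) (I : R -> Prop) : wn_is_ideal I -> I 0.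
Proof. by case. Qed.

Lemma pireg (R : comNzRingType) (n : nat)
  (H : forall I : R -> Prop, @wn_proper_ideal R I -> @weakly_n_absorbing R n I) (x : R) :
  exists r, x ^+ n.+1 = r * x ^+ n.+2.
Proof.
case: (classic (exists y, x * y = 1)) => [[y hy]|hnu].
  by exists y; rewrite [x ^+ n.+2]exprS mulrA (mulrC y) hy mul1r.
case: (classic (x ^+ n.+1 = 0)) => [h0|hn0].
  by exists 0; rewrite h0 mul0r.
pose I := fun z : R => exists s, z = s * x ^+ n.+1.
have hI : wn_proper_ideal I.
  split; first split.
  - by exists 0; rewrite mul0r.
  - by move=> a b [s ->] [t ->]; exists (s + t); rewrite mulrDl.
  - by move=> a [s ->]; exists (- s); rewrite mulNr.
  - by move=> r a [s ->]; exists (r * s); rewrite mulrA.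
  - move=> [s hs]; apply: hnu; exists (s * x ^+ n).
    by rewrite hs exprS mulrCA mulrA.
have [_ hw] := H I hI.
have hprod : \prod_(i < n.+1) (fun _ => x) i = x ^+ n.+1.
  by rewrite prodr_const card_ord.
have hn0' : \prod_(i < n.+1) (fun _ => x) i != 0 by rewrite hprod; apply/eqP.
have hIp : I (\prod_(i < n.+1) (fun _ => x) i) by rewrite hprod; exists 1; rewrite mul1r.
have [j [s hs]] := hw (fun _ => x) hn0' hIp.
exists s.
rewrite -{1}hprod (bigD1 j) //= hs [x ^+ n.+2]exprS.
by rewrite mulrCA.
Qed.

From mathcomp Require Import ring.
Lemma prime_pow (R : comNzRingType) (P : R -> Prop) x k :
  wn_prime_ideal P -> P (x ^+ k.+1) -> P x.
Proof.
move=> hP; elim: k => [|k IH]; first by rewrite expr1.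
by rewrite exprS => /(proj2 hP) [].
Qed.

Lemma prime_nprod (R : comNzRingType) (P : R -> Prop) (I : finType) (Q : pred I) (F : I -> R) :
  wn_prime_ideal P -> (forall i, Q i -> ~ P (F i)) -> ~ P (\prod_(i | Q i) F i).
Proof.
move=> hP hF; apply: (big_ind (fun z => ~ P z)) => //.
- by case: hP => [[_ h1]] _.
- by move=> a b ha hb /(proj2 hP) [].
Qed.

Lemma dim0_part (R : comNzRingType) (n : nat)
  (H : forall I : R -> Prop, @wn_proper_ideal R I -> @weakly_n_absorbing R n I) (P Q : R -> Prop) :
  wn_prime_ideal P -> wn_prime_ideal Q -> subset_ideal P Q -> subset_ideal Q P.
Proof.
move=> hP hQ sPQ x hx.
have [r hr] := pireg H x.
have h0 : P (x ^+ n.+1 * (1 - r * x)).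
  have -> : x ^+ n.+1 * (1 - r * x) = 0.
    have e2 : x ^+ n.+2 = x * x ^+ n.+1 := exprS _ _.
    rewrite mulrBr mulr1 {1}hr e2; ring.
  by apply: id_0; case: hP => [[]].
case: (proj2 hP _ _ h0) => [/(prime_pow hP) //|h1].
have := sPQ _ h1 => h2.
case: hQ => [[hQi hQ1]] _; exfalso; apply: hQ1.
have -> : (1 : R) = (1 - r * x) + r * x by rewrite subrK.
by apply: id_add => //; apply: id_mulr.
Qed.

Lemma comax_bound (R : comNzRingType) (n : nat)
  (H : forall I : R -> Prop, @wn_proper_ideal R I -> @weakly_n_absorbing R n I)
  (m : nat) (P : 'I_m -> R -> Prop) :
  (forall i, wn_prime_ideal (P i)) ->
  (forall i j, i != j -> comaximal (P i) (P j)) -> (m <= n.+1)%N.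
Proof.
move=> hP hC.
have hE : forall i j, exists x, i != j -> P j x /\ P i (1 - x).
  move=> i j; case: (boolP (i != j)) => hij; last by exists 0.
  have [a [b [ha [hb hab]]]] := hC j i ltac:(by rewrite eq_sym).
  exists a => _; have -> : 1 - a = b by rewrite -hab; ring.
  by split.
pose X i j := proj1_sig (constructive_indefinite_description _ (hE i j)).
have hX : forall i j, i != j -> P j (X i j) /\ P i (1 - X i j).
  by move=> i j; rewrite /X; case: constructive_indefinite_description.
pose a i := \prod_(j | j != i) X i j.
have ha1 : forall i, P i (1 - a i).
  move=> i; have [[hI _] _] := hP i.
  apply: (big_ind (fun z => P i (1 - z))).
  - by rewrite subrr; apply: id_0.
  - move=> u v hu hv.
    have -> : 1 - u * v = (1 - u) + u * (1 - v) by rewrite mulrBr mulr1 addrA subrK.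
    by apply: id_add => //; apply: id_mulr.
  - by move=> j hj; apply: (proj2 (hX i j _)); rewrite eq_sym.
have ha2 : forall i j, i != j -> P j (a i).
  move=> i j hij; rewrite /a (bigD1 j) 1?eq_sym //=.
  have [[hI _] _] := hP j.
  by apply: id_mull => //; apply: (proj1 (hX i j hij)).
pose e i := 1 - a i.
have he1 : forall i, P i (e i) by [].
have he2 : forall i j, i != j -> ~ P j (e i).
  move=> i j hij hj; have [[hI hn1] _] := hP j; apply: hn1.
  have -> : (1 : R) = e i + a i by rewrite /e subrK.
  by apply: id_add => //; apply: ha2.
rewrite leqNgt; apply/negP => hm.
pose iota (t : 'I_n.+1) : 'I_m := widen_ord (ltnW hm) t.
pose k : 'I_m := Ordinal hm.
have hiota : forall t t', (iota t == iota t') = (t == t').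
  by move=> t t'; rewrite /iota -!val_eqE.
have hik : forall t, iota t != k.
  by move=> t; rewrite -val_eqE /= neq_ltn ltn_ord.
pose A t := e (iota t).
pose I := fun z => forall t, P (iota t) z.
have hI : wn_proper_ideal I.
  split; first split.
  - by move=> t; apply: id_0; case: (hP (iota t)) => [[]].
  - by move=> u v hu hv t; apply: id_add; [case: (hP (iota t)) => [[]]| |].
  - move=> u hu t; have [[[_ _ hn _] _] _] := hP (iota t); exact: hn.
  - by move=> r u hu t; apply: id_mulr; [case: (hP (iota t)) => [[]]|].
  - move=> h1; have [[_ hn1] _] := hP (iota ord0); exact: hn1.
have [_ hw] := H I hI.
have hnz : \prod_(t < n.+1) A t != 0.
  apply/eqP => h0; have := prime_nprod (hP k) (F := A) (Q := predT).
  rewrite h0; apply => //; last by apply: id_0; case: (hP k) => [[]].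
  by move=> t _; apply: he2; exact: hik.
have hIp : I (\prod_(t < n.+1) A t).
  move=> t; rewrite (bigD1 t) //=; apply: id_mull; first by case: (hP (iota t)) => [[]].
  exact: he1.
have [j hj] := hw A hnz hIp.
apply: (prime_nprod (hP (iota j)) (Q := fun i => i != j) (F := A)) (hj j).
by move=> i hij; apply: he2; rewrite hiota.
Qed.

Lemma max_prime (R : comNzRingType) (M : R -> Prop) :
  wn_maximal_ideal M -> wn_prime_ideal M.
Proof.
move=> [[hI hn1] hmax]; split => // a b hab.
case: (classic (M a)) => ha; [by left|right].
pose J := fun z => exists m s, M m /\ z = m + s * a.
have hJ : wn_is_ideal J.
  split.
  - by exists 0, 0; rewrite mul0r addr0; split => //; apply: id_0.
  - move=> u v [m [s [hm ->]]] [m' [s' [hm' ->]]]; exists (m + m'), (s + s').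
    by split; [apply: id_add|ring].
  - move=> u [m [s [hm ->]]]; exists (- m), (- s).
    by split; [rewrite -mulN1r; apply: id_mulr|ring].
  - move=> r u [m [s [hm ->]]]; exists (r * m), (r * s).
    by split; [apply: id_mulr|ring].
have sMJ : subset_ideal M J by move=> z hz; exists z, 0; rewrite mul0r addr0.
case: (hmax J hJ sMJ) => [sJM|[m [s [hm h1]]]].
  by exfalso; apply: ha; apply: sJM; exists 0, 1; rewrite mul1r add0r; split => //; apply: id_0.
have -> : b = m * b + s * (a * b) by rewrite mulrA -mulrDl -h1 mul1r.
by apply: id_add => //; [apply: id_mull|apply: id_mulr].
Qed.

Lemma max_comax (R : comNzRingType) (M N : R -> Prop) :
  wn_maximal_ideal M -> wn_maximal_ideal N -> M <> N -> comaximal M N.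
Proof.
move=> hM hN hMN.
have nsub : ~ subset_ideal M N.
  move=> sMN; apply: hMN.
  case: (proj2 hM N (proj1 (proj1 hN)) sMN) => [sNM|h1]; last by case: (proj2 (proj1 hN)).
  apply: functional_extensionality => z; apply: propositional_extensionality.
  by split; [apply: sMN|apply: sNM].
pose J := fun z => exists a b, M a /\ N b /\ z = a + b.
have [[hMi _] _] := hM; have [[hNi _] _] := hN.
have hJ : wn_is_ideal J.
  split.
  - by exists 0, 0; rewrite addr0; split; [|split] => //; apply: id_0.
  - move=> u v [a [b [ha [hb ->]]]] [a' [b' [ha' [hb' ->]]]]; exists (a + a'), (b + b').
    by split; [apply: id_add|split; [apply: id_add|ring]].
  - move=> u [a [b [ha [hb ->]]]]; exists (- a), (- b).
    by split; [rewrite -mulN1r; apply: id_mulr|split; [rewrite -mulN1r; apply: id_mulr|ring]].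
  - move=> r u [a [b [ha [hb ->]]]]; exists (r * a), (r * b).
    by split; [apply: id_mulr|split; [apply: id_mulr|ring]].
have sNJ : subset_ideal N J by move=> z hz; exists 0, z; rewrite add0r; split => //; apply: id_0.
case: (proj2 hN J hJ sNJ) => [sJN|[a [b [ha [hb h1]]]]].
  by exfalso; apply: nsub => z hz; apply: sJN; exists z, 0; rewrite addr0; split => //; split => //; apply: id_0.
by exists a, b.
Qed.

Definition Inv (R : comNzRingType) (k : nat) : Prop :=
  exists (a d : nat -> R) (h : R), h * h = h /\ h <> 0 /\
    (forall i, (i < k)%N -> a i * h = h) /\ (forall j, (j < k)%N -> d j <> 0) /\
    (forall j, (j < k)%N -> d j * a j = 0) /\
    (forall i j, (i < k)%N -> (j < k)%N -> i <> j -> d j * a i = d j) /\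
    (forall j, (j < k)%N -> d j * h = 0).

Lemma Inv_step (R : comNzRingType) k :
  (forall e : R, e * e = e -> e <> 0 -> exists f, f * f = f /\ e * f <> 0 /\ e * f <> e) ->
  Inv R k -> Inv R k.+1.
Proof.
move=> hna [a [d [h [hh [hn0 [ha [hd0 [hda [hdai hdh]]]]]]]]].
have [f [ff [hf0 hfh]]] := hna h hh hn0.
have hhf : h * f * (h * f) = h * f.
  have -> : h * f * (h * f) = (h * h) * (f * f) by ring.
  by rewrite hh ff.
exists (fun i => if i == k then 1 - h * f else a i).
exists (fun i => if i == k then h * f else d i).
exists (h - h * f).
have lt : forall i, (i < k.+1)%N -> i != k -> (i < k)%N.
  by move=> i; rewrite ltnS leq_eqVlt => /orP [->|].
split.
  have -> : (h - h * f) * (h - h * f) = h * h - (h * h) * f - (h * h) * f + (h * f) * (h * f) by ring.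
  by rewrite hhf hh; ring.
split.
  move=> e0; apply: hfh; apply/eqP; by rewrite eq_sym -subr_eq0 e0.
split.
  move=> i hi; case: eqP => hik.
    have -> : (1 - h * f) * (h - h * f) = h - h * f - ((h * h) * f) + h * f * (h * f) by ring.
    by rewrite hhf hh; ring.
  by rewrite mulrBr mulrA ha //; apply: lt => //; apply/eqP.
split.
  by move=> j hj; case: eqP => // hjk; apply: hd0; apply: lt => //; apply/eqP.
split.
  move=> j hj; case: eqP => hjk.
    by rewrite mulrBr mulr1 hhf subrr.
  by apply: hda; apply: lt => //; apply/eqP.
split.
  move=> i j hi hj hij; case: eqP => hjk; case: eqP => hik.
  - by exfalso; apply: hij; rewrite hik hjk.
  - have hi' : (i < k)%N by apply: lt => //; apply/eqP.
    by rewrite mulrC mulrA ha.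
  - have hj' : (j < k)%N by apply: lt => //; apply/eqP.
    by rewrite mulrBr mulr1 mulrA hdh // mul0r subr0.
  - by apply: hdai => //; apply: lt => //; apply/eqP.
move=> j hj; case: eqP => hjk.
  have -> : h * f * (h - h * f) = ((h * h) * f) - h * f * (h * f) by ring.
  by rewrite hhf hh; ring.
have hj' : (j < k)%N by apply: lt => //; apply/eqP.
by rewrite mulrBr mulrA hdh // mul0r subr0.
Qed.

Lemma atom_exists (R : comNzRingType) (n : nat)
  (H : forall I : R -> Prop, @wn_proper_ideal R I -> @weakly_n_absorbing R n I) :
  exists e : R, e * e = e /\ e <> 0 /\ forall f, f * f = f -> e * f = 0 \/ e * f = e.
Proof.
apply: NNPP => hne.
have hna : forall e : R, e * e = e -> e <> 0 -> exists f, f * f = f /\ e * f <> 0 /\ e * f <> e.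
  move=> e ee e0; apply: NNPP => hf; apply: hne; exists e; split => //; split => // f ff.
  apply: NNPP => hc; apply: hf; exists f; split => //; split => hx; apply: hc; by [left|right].
have hInv : forall k, Inv R k.
  elim=> [|k IH]; last by apply: Inv_step.
  exists (fun _ => 0), (fun _ => 0), 1; split; first by rewrite mulr1.
  by split; [apply/eqP; apply: oner_neq0|].
have [a [d [h [hh [hn0 [ha [hd0 [hda [hdai hdh]]]]]]]]] := hInv n.+1.
pose A (i : 'I_n.+1) := a i.
pose I := fun z : R => forall j, (j < n.+1)%N -> z * d j = 0.
have hI : wn_proper_ideal I.
  split; first split.
  - by move=> j _; rewrite mul0r.
  - by move=> u v hu hv j hj; rewrite mulrDl hu // hv // addr0.
  - by move=> u hu j hj; rewrite mulNr hu // oppr0.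
  - by move=> r u hu j hj; rewrite -mulrA hu // mulr0.
  - by move=> h1; apply: (hd0 0%N) => //; rewrite -(h1 0%N) // mul1r.
have [_ hw] := H I hI.
have hnz : \prod_(i < n.+1) A i != 0.
  apply/eqP => h0; apply: hn0.
  have : (\prod_(i < n.+1) A i) * h = h.
    apply: (big_ind (fun z => z * h = h)); first by rewrite mul1r.
      by move=> u v hu hv; rewrite -mulrA hv hu.
    by move=> i _; apply: ha.
  by rewrite h0 mul0r.
have hIp : I (\prod_(i < n.+1) A i).
  move=> j hj; rewrite (bigD1 (Ordinal hj)) //= /A /=.
  by rewrite mulrC mulrA hda // mul0r.
have [j hj] := hw A hnz hIp.
have := hj j (ltn_ord j).
have -> : (\prod_(i < n.+1 | i != j) A i) * d j = d j.
  apply: (big_ind (fun z => z * d j = d j)); first by rewrite mul1r.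
    by move=> u v hu hv; rewrite -mulrA hv hu.
  move=> i hij; rewrite mulrC; apply: hdai => // /val_inj hv.
  by move/eqP: hij; apply.
by apply: hd0.
Qed.

Lemma atom_nil (R : comNzRingType) (n : nat)
  (H : forall I : R -> Prop, @wn_proper_ideal R I -> @weakly_n_absorbing R n I)
  (e : R) (ee : e * e = e) (hat : forall f, f * f = f -> e * f = 0 \/ e * f = e) (x : R) :
  ~ (exists y, x * y * e = e) -> (x * e) ^+ n.+1 = 0.
Proof.
move=> hx; set z := x * e.
have [r hr] := pireg H z.
set t := r * z.
have hz : z ^+ n.+1 = t * z ^+ n.+1.
  by rewrite {1}hr [z ^+ n.+2]exprS /t mulrA.
have hk : forall k, z ^+ n.+1 = t ^+ k * z ^+ n.+1.
  elim=> [|k IH]; first by rewrite expr0 mul1r.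
  by rewrite [t ^+ k.+1]exprSr -mulrA -hz.
set f := t ^+ n.+1.
have hf : f = r ^+ n.+1 * z ^+ n.+1 by rewrite /f /t exprMn.
have ff : f * f = f.
  by rewrite {2}hf mulrCA -hk -hf.
have et : e * t = t.
  rewrite /t /z; have -> : e * (r * (x * e)) = r * x * (e * e) by ring.
  by rewrite ee mulrA.
have ef : e * f = f by rewrite /f exprS mulrA et.
case: (hat f ff); rewrite ef => hf0.
  by rewrite (hk n.+1) -/f hf0 mul0r.
exfalso; apply: hx; exists (r * t ^+ n).
rewrite -{2}hf0 /f exprS /t /z; ring.
Qed.

Lemma atom_prime (R : comNzRingType) (n : nat)
  (H : forall I : R -> Prop, @wn_proper_ideal R I -> @weakly_n_absorbing R n I)
  (e : R) (ee : e * e = e) (e0 : e <> 0)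
  (hat : forall f, f * f = f -> e * f = 0 \/ e * f = e) :
  wn_prime_ideal (fun x => ~ (exists y, x * y * e = e)).
Proof.
split; first split; first split.
- by move=> [y]; rewrite !mul0r => h; apply: e0.
- move=> x x' hx hx' [y hy].
  have nx := atom_nil H ee hat hx.
  set w := x * y * e.
  have hw : w ^+ n.+1 = 0 by rewrite /w -mulrA (mulrC y) mulrA exprMn nx mul0r.
  set S := \sum_(i < n.+1) w ^+ i.
  have hS : (1 - w) * S = 1.
    have := subrX1 w n.+1; rewrite hw sub0r => h.
    by rewrite -[LHS]opprK -mulNr opprB -h opprK.
  apply: hx'; exists (y * S).
  have -> : x' * (y * S) * e = (x' * y * e) * S by ring.
  have ew : e * w = w.
    rewrite /w; have -> : e * (x * y * e) = x * y * (e * e) by ring.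
    by rewrite ee.
  have -> : x' * y * e = e * (1 - w).
    by rewrite mulrBr mulr1 ew /w -{2}hy !mulrDl addrAC subrr add0r.
  by rewrite -mulrA hS mulr1.
- move=> x hx [y hy]; apply: hx; exists (- y); by rewrite -{2}hy; ring.
- move=> r x hx [y hy]; apply: hx; exists (r * y); by rewrite -{2}hy; ring.
- by apply; exists 1; rewrite !mul1r.
move=> a b hab; apply: NNPP => hc.
have [ha hb] : ~ ~ (exists y, a * y * e = e) /\ ~ ~ (exists y, b * y * e = e).
  by split => h; apply: hc; [left|right].
have [y hy] := NNPP _ ha; have [z hz] := NNPP _ hb.
apply: hab; exists (y * z).
by rewrite -{2}hy -{2}hz; ring.
Qed.

Theorem mainTheorem7 (R : comNzRingType) (n : nat) (hn : (0 < n)%N)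
  (H : forall I : R -> Prop, @wn_proper_ideal R I -> @weakly_n_absorbing R n I) :
  krull_dim_zero R /\
  (forall (m : nat) (P : 'I_m -> R -> Prop),
      (forall i, wn_prime_ideal (P i)) ->
      (forall i j, i != j -> comaximal (P i) (P j)) ->
      (m <= n.+1)%N) /\
  (forall (m : nat) (M : 'I_m -> R -> Prop),
      (forall i, wn_maximal_ideal (M i)) -> injective M ->
      (m <= n.+1)%N).
Proof.
split.
  split; last by move=> P Q hP hQ; exact: (dim0_part H hP hQ).
  have [e [ee [e0 hat]]] := atom_exists H.
  by exists (fun x => ~ (exists y, x * y * e = e)); apply: (atom_prime H ee e0 hat).
split; first by move=> m P hP hC; exact: (comax_bound H hP hC).
move=> m M hM hinj.
have hP : forall i, wn_prime_ideal (M i) by move=> i; apply: max_prime.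
have hC : forall i j, i != j -> comaximal (M i) (M j).
  move=> i j hij; apply: max_comax => // hMij.
  by move/eqP: hij; apply; apply: hinj.
exact: (comax_bound H hP hC).
Qed.
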